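(* Let $\mathsf{Ax}\subseteq\{\mathsf{C}_\Diamond,\mathsf{I}_{\Diamond\Box}\}$. Then $\mathsf{CK}\oplus\mathsf{N}_{\Diamond\Box}\oplus\mathsf{Ax}$ is sound and strongly complete with respect to the class of $\mathsf{CK}$-frames satisfying ($\mathsf{N}_{\Diamond\Box}$-corr) and ($\mathsf{A}$-suff) for each $\mathsf{A}\in\mathsf{Ax}$. Moreover, if $\mathsf{I}_{\Diamond\Box}\in\mathsf{Ax}$, it is also sound and strongly complete with respect to the class of $\mathsf{CK}$-frames satisfying ($\mathsf{N}_{\Diamond\Box}$-suff) and ($\mathsf{A}$-suff) for each $\mathsf{A}\in\mathsf{Ax}$. (Sound and strongly complete w.r.t. $\mathcal{F}$ means $\Gamma\vdash\varphi$ iff $\Gamma\Vdash_{\mathcal{F}}\varphi$ for all $\Gamma\subseteq\mathbf{L}$, $\varphi\in\mathbf{L}$.)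
   Context: Formulas: $\mathbf{L}$ is generated from a countably infinite set of propositional variables by $\varphi ::= p \mid \bot \mid \varphi\wedge\varphi \mid \varphi\vee\varphi \mid \varphi\to\varphi \mid \Box\varphi \mid \Diamond\varphi$. Axioms: $\mathsf{K}_\Box$: $\Box(\varphi\to\psi)\to(\Box\varphi\to\Box\psi)$; $\mathsf{K}_\Diamond$: $\Box(\varphi\to\psi)\to(\Diamond\varphi\to\Diamond\psi)$; $\mathsf{N}_{\Diamond\Box}$: $\Diamond\bot\to\Box\bot$; $\mathsf{C}_\Diamond$: $\Diamond(\varphi\vee\psi)\to\Diamond\varphi\vee\Diamond\psi$; $\mathsf{I}_{\Diamond\Box}$: $(\Diamond\varphi\to\Box\psi)\to\Box(\varphi\to\psi)$. For a set $\mathsf{Ax}$ of axioms, $\mathsf{CK}\oplus\mathsf{Ax}$ is the relation $\Gamma\vdash_{\mathsf{Ax}}\varphi$ inductively generated by: (Ax) $\Gamma\vdash\varphi$ whenever $\varphi$ is a substitution instance of an axiom of a standard Hilbert axiomatisation of intuitionistic propositional logic, of $\mathsf{K}_\Box$, of $\mathsf{K}_\Diamond$, or of an element of $\mathsf{Ax}$; (El) $\Gamma\vdash\varphi$ if $\varphi\in\Gamma$; (MP) from $\Gamma\vdash\varphi$ and $\Gamma\vdash\varphi\to\psi$ infer $\Gamma\vdash\psi$; (Nec) from $\emptyset\vdash\varphi$ infer $\Gamma\vdash\Box\varphi$. A $\mathsf{CK}$-frame is a tuple $(X,e,\le,R)$ where $(X,\le)$ is a preorder, $e\in X$ is a maximal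 element of $(X,\le)$, and $R$ is a binary relation on $X$ with $eRx$ iff $x=e$. A valuation assigns to each variable $p$ an upset $V(p)$ with $e\in V(p)$. Forcing: $x\Vdash p$ iff $x\in V(p)$; $x\Vdash\bot$ iff $x=e$; $\wedge,\vee$ pointwise; $x\Vdash\varphi\to\psi$ iff for all $y\ge x$, $y\Vdash\varphi$ implies $y\Vdash\psi$; $x\Vdash\Box\varphi$ iff for all $y,z$ with $x\le y$ and $yRz$, $z\Vdash\varphi$; $x\Vdash\Diamond\varphi$ iff for all $y\ge x$ there is $z$ with $yRz$ and $z\Vdash\varphi$. For a class $\mathcal{F}$ of frames, $\Gamma\Vdash_{\mathcal{F}}\varphi$ means: for every frame in $\mathcal{F}$, every valuation and every world $x$, if $x$ forces all of $\Gamma$ then $x\Vdash\varphi$. Frame conditions: ($\mathsf{N}_{\Diamond\Box}$-suff) for all $x,y$, if $xRe$ and $xRy$ then $y=e$. ($\mathsf{N}_{\Diamond\Box}$-corr) for all $x$, if $yRe$ for every $y\ge x$, then for all $y,z$ with $x\le y$ and $yRz$, $z=e$. ($\mathsf{C}_\Diamond$-suff) for all $x$ there is $x'\ge x$ such that for all $y,z$, if $x\le y$ and $x'Rz$ then there is $w$ with $yRw$ and $z\le w$. ($\mathsf{I}_{\Diamond\Box}$-suff) for all $x,y,z$ with $xRy$ and $y\le z$ there is $u$ with $x\le u$ and $uRz$ such that for every $s\ge u$ there is $t$ with $sRt$ and $z\le t$. *)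

(* Defs.v *)
Inductive form : Type :=
| Var : nat -> form
| Bot : form
| And : form -> form -> form
| Or  : form -> form -> form
| Imp : form -> form -> form
| Box : form -> form
| Dia : form -> form.

Inductive ipc_axiom : form -> Prop :=
| A1 p q : ipc_axiom (Imp p (Imp q p))
| A2 p q r : ipc_axiom (Imp (Imp p (Imp q r)) (Imp (Imp p q) (Imp p r)))
| A3 p q : ipc_axiom (Imp (And p q) p)
| A4 p q : ipc_axiom (Imp (And p q) q)
| A5 p q : ipc_axiom (Imp p (Imp q (And p q)))
| A6 p q : ipc_axiom (Imp p (Or p q))
| A7 p q : ipc_axiom (Imp q (Or p q))
| A8 p q r : ipc_axiom (Imp (Imp p r) (Imp (Imp q r) (Imp (Or p q) r)))
| A9 p : ipc_axiom (Imp Bot p).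

Inductive ck_axiom : form -> Prop :=
| KBox p q : ck_axiom (Imp (Box (Imp p q)) (Imp (Box p) (Box q)))
| KDia p q : ck_axiom (Imp (Box (Imp p q)) (Imp (Dia p) (Dia q))).

Inductive N_axiom : form -> Prop :=
| NDB : N_axiom (Imp (Dia Bot) (Box Bot)).

Inductive C_axiom : form -> Prop :=
| CD p q : C_axiom (Imp (Dia (Or p q)) (Or (Dia p) (Dia q))).

Inductive I_axiom : form -> Prop :=
| IDB p q : I_axiom (Imp (Imp (Dia p) (Box q)) (Box (Imp p q))).

(** Extra axioms of CK + N + Ax, where Ax ⊆ {C, I} is encoded by two
    booleans: [hasC] (C_Dia ∈ Ax) and [hasI] (I_{Dia Box} ∈ Ax). *)
Definition extra_axioms (hasC hasI : bool) (f : form) : Prop :=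
  N_axiom f \/ (hasC = true /\ C_axiom f) \/ (hasI = true /\ I_axiom f).

Inductive prv (Ax : form -> Prop) : (form -> Prop) -> form -> Prop :=
| PrvIPC Γ f : ipc_axiom f -> prv Ax Γ f
| PrvCK Γ f : ck_axiom f -> prv Ax Γ f
| PrvAx Γ f : Ax f -> prv Ax Γ f
| PrvEl (Γ : form -> Prop) f : Γ f -> prv Ax Γ f
| PrvMP Γ f g : prv Ax Γ f -> prv Ax Γ (Imp f g) -> prv Ax Γ g
| PrvNec Γ f : prv Ax (fun _ => False) f -> prv Ax Γ (Box f).

Record frame : Type := {
  W : Type;
  e : W;
  le : W -> W -> Prop;
  R : W -> W -> Prop;
  le_refl : forall x, le x x;
  le_trans : forall x y z, le x y -> le y z -> le x z;
  e_max : forall x, le e x -> x = e;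
  eR : forall x, R e x <-> x = e
}.

Arguments e {_}.
Arguments le {_} _ _.
Arguments R {_} _ _.

Definition valuation (F : frame) (V : nat -> W F -> Prop) : Prop :=
  forall p, (forall x y, le x y -> V p x -> V p y) /\ V p e.

Fixpoint forces (F : frame) (V : nat -> W F -> Prop) (x : W F) (f : form)
  : Prop :=
  match f with
  | Var p => V p x
  | Bot => x = e
  | And a b => forces F V x a /\ forces F V x b
  | Or a b => forces F V x a \/ forces F V x b
  | Imp a b => forall y, le x y -> forces F V y a -> forces F V y b
  | Box a => forall y z, le x y -> R y z -> forces F V z a
  | Dia a => forall y, le x y -> exists z, R y z /\ forces F V z a
  end.

Definition sem_conseq (C : frame -> Prop) (Γ : form -> Prop) (f : form)
  : Prop :=
  forall F V x, C F -> valuation F V ->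
    (forall g, Γ g -> forces F V x g) -> forces F V x f.

Definition sound_strongly_complete (Ax : form -> Prop) (C : frame -> Prop)
  : Prop :=
  forall (Γ : form -> Prop) (f : form), prv Ax Γ f <-> sem_conseq C Γ f.

Definition N_suff (F : frame) : Prop :=
  forall x y : W F, R x e -> R x y -> y = e.

Definition N_corr (F : frame) : Prop :=
  forall x : W F, (forall y, le x y -> R y e) ->
    forall y z, le x y -> R y z -> z = e.

Definition C_suff (F : frame) : Prop :=
  forall x : W F, exists x', le x x' /\
    forall y z, le x y -> R x' z -> exists w, R y w /\ le z w.

Definition I_suff (F : frame) : Prop :=
  forall x y z : W F, R x y -> le y z ->
    exists u, le x u /\ R u z /\
      forall s, le u s -> exists t, R s t /\ le z t.

(* Main.v *)
Require Import Defs.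
From Stdlib Require Import List Classical FunctionalExtensionality PropExtensionality ProofIrrelevance Cantor Lia.
Import ListNotations.

Definition add (G : form -> Prop) a := fun f => G f \/ f = a.
Definition emp : form -> Prop := fun _ => False.

Lemma prv_mono Ax G f : prv Ax G f -> forall G', (forall g, G g -> G' g) -> prv Ax G' f.
Proof.
  induction 1; intros G' HG.
  - apply PrvIPC; auto.
  - apply PrvCK; auto.
  - apply PrvAx; auto.
  - apply PrvEl; auto.
  - eapply PrvMP; eauto.
  - apply PrvNec; auto.
Qed.

Lemma thm_in Ax G f : prv Ax emp f -> prv Ax G f.
Proof. intros H; eapply prv_mono; [exact H| intros g []]. Qed.

Lemma mp Ax G f g : prv Ax G (Imp f g) -> prv Ax G f -> prv Ax G g.
Proof. intros; eapply PrvMP; eauto. Qed.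

Lemma ax1 Ax G p q : prv Ax G (Imp p (Imp q p)).
Proof. apply PrvIPC; constructor. Qed.
Lemma ax2 Ax G p q r : prv Ax G (Imp (Imp p (Imp q r)) (Imp (Imp p q) (Imp p r))).
Proof. apply PrvIPC; constructor. Qed.

Lemma prv_id Ax G a : prv Ax G (Imp a a).
Proof.
  eapply mp; [eapply mp; [apply (ax2 Ax G a (Imp a a) a)| apply ax1]|apply ax1].
Qed.

Lemma deduction Ax G a b : prv Ax (add G a) b -> prv Ax G (Imp a b).
Proof.
  intros H; remember (add G a) as G'; induction H; subst.
  - eapply mp; [apply ax1| apply PrvIPC; auto].
  - eapply mp; [apply ax1| apply PrvCK; auto].
  - eapply mp; [apply ax1| apply PrvAx; auto].
  - destruct H as [H|H].
    + eapply mp; [apply ax1| apply PrvEl; auto].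
    + subst; apply prv_id.
  - eapply mp; [eapply mp; [apply ax2| apply IHprv2; auto]| apply IHprv1; auto].
  - eapply mp; [apply ax1| apply PrvNec; auto].
Qed.

Lemma undeduct Ax G a b : prv Ax G (Imp a b) -> prv Ax (add G a) b.
Proof.
  intros H; eapply mp; [eapply prv_mono; [exact H| intros g Hg; left; exact Hg]|].
  apply PrvEl; right; reflexivity.
Qed.

Lemma elem Ax G f : G f -> prv Ax G f.
Proof. apply PrvEl. Qed.

Lemma hyp Ax G a : prv Ax (add G a) a.
Proof. apply PrvEl; right; reflexivity. Qed.

Lemma weak Ax G a f : prv Ax G f -> prv Ax (add G a) f.
Proof. intros H; eapply prv_mono; [exact H| intros g Hg; left; exact Hg]. Qed.

Lemma compose Ax G a b c : prv Ax G (Imp a b) -> prv Ax G (Imp b c) -> prv Ax G (Imp a c).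
Proof.
  intros H1 H2; apply deduction.
  eapply mp; [apply weak; exact H2|]. eapply mp; [apply weak; exact H1| apply hyp].
Qed.

Lemma ipc Ax G f : ipc_axiom f -> prv Ax G f.
Proof. apply PrvIPC. Qed.

Lemma and_i Ax G a b : prv Ax G a -> prv Ax G b -> prv Ax G (And a b).
Proof. intros; eapply mp; [eapply mp; [apply ipc; apply A5| eauto]| eauto]. Qed.
Lemma and_l Ax G a b : prv Ax G (And a b) -> prv Ax G a.
Proof. intros; eapply mp; [apply ipc; apply A3| eauto]. Qed.
Lemma and_r Ax G a b : prv Ax G (And a b) -> prv Ax G b.
Proof. intros; eapply mp; [apply ipc; apply A4| eauto]. Qed.
Lemma or_l Ax G a b : prv Ax G a -> prv Ax G (Or a b).
Proof. intros; eapply mp; [apply ipc; apply A6| eauto]. Qed.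
Lemma or_r Ax G a b : prv Ax G b -> prv Ax G (Or a b).
Proof. intros; eapply mp; [apply ipc; apply A7| eauto]. Qed.
Lemma or_e Ax G a b c : prv Ax G (Or a b) -> prv Ax G (Imp a c) -> prv Ax G (Imp b c) -> prv Ax G c.
Proof. intros H1 H2 H3. eapply mp; [eapply mp; [eapply mp; [apply ipc; apply (A8 a b c)| exact H2]|exact H3]|exact H1]. Qed.
Lemma bot_e Ax G a : prv Ax G Bot -> prv Ax G a.
Proof. intros; eapply mp; [apply ipc; apply A9| eauto]. Qed.

Lemma kbox Ax G p q : prv Ax G (Box (Imp p q)) -> prv Ax G (Box p) -> prv Ax G (Box q).
Proof. intros; eapply mp; [eapply mp; [apply PrvCK; apply KBox| eauto]|eauto]. Qed.
Lemma kdia Ax G p q : prv Ax G (Box (Imp p q)) -> prv Ax G (Dia p) -> prv Ax G (Dia q).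
Proof. intros; eapply mp; [eapply mp; [apply PrvCK; apply KDia| eauto]|eauto]. Qed.
Lemma nec Ax G f : prv Ax emp f -> prv Ax G (Box f).
Proof. apply PrvNec. Qed.

Fixpoint imps (l : list form) (b : form) : form :=
  match l with [] => b | a :: l => Imp a (imps l b) end.
Fixpoint disj (l : list form) : form :=
  match l with [] => Bot | a :: l => Or a (disj l) end.

Lemma imps_intro Ax l : forall G b, prv Ax (fun f => G f \/ In f l) b -> prv Ax G (imps l b).
Proof.
  induction l as [|a l IH]; intros G b H; simpl.
  - eapply prv_mono; [exact H|]. intros g [Hg|[]]; auto.
  - apply deduction, IH. eapply prv_mono; [exact H|].
    intros g [Hg|[Hg|Hg]]; unfold add; auto.
Qed.

Lemma imps_elim Ax l : forall G b, prv Ax G (imps l b) -> prv Ax (fun f => G f \/ In f l) b.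
Proof.
  induction l as [|a l IH]; intros G b H; simpl in *.
  - eapply prv_mono; [exact H|]. intros g Hg; auto.
  - apply undeduct in H. apply IH in H. eapply prv_mono; [exact H|].
    intros g [[Hg|Hg]|Hg]; auto.
Qed.

Lemma disj_app1 Ax G l1 l2 : prv Ax G (Imp (disj l1) (disj (l1 ++ l2))).
Proof.
  induction l1 as [|a l1 IH]; simpl.
  - apply deduction, bot_e, hyp.
  - apply deduction. eapply or_e; [apply hyp| |].
    + apply deduction, or_l, hyp.
    + apply deduction, or_r. eapply mp; [apply weak, weak, IH| apply hyp].
Qed.

Lemma disj_app2 Ax G l1 l2 : prv Ax G (Imp (disj l2) (disj (l1 ++ l2))).
Proof.
  induction l1 as [|a l1 IH]; simpl.
  - apply prv_id.
  - apply deduction, or_r. eapply mp; [apply weak, IH| apply hyp].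
Qed.

Lemma disj_single Ax G l b : (forall a, In a l -> a = b) -> prv Ax G (Imp (disj l) b).
Proof.
  induction l as [|a l IH]; intros H; simpl.
  - apply deduction, bot_e, hyp.
  - apply deduction. eapply or_e; [apply hyp| |].
    + rewrite (H a (or_introl eq_refl)). apply prv_id.
    + apply weak, IH. intros; apply H; right; auto.
Qed.

Arguments to_nat : simpl never.
Fixpoint enc (f : form) : nat :=
  match f with
  | Var n => to_nat (0, n)
  | Bot => to_nat (1, 0)
  | And a b => to_nat (2, to_nat (enc a, enc b))
  | Or a b => to_nat (3, to_nat (enc a, enc b))
  | Imp a b => to_nat (4, to_nat (enc a, enc b))
  | Box a => to_nat (5, enc a)
  | Dia a => to_nat (6, enc a)
  end.

Lemma to_nat_inj p q : to_nat p = to_nat q -> p = q.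
Proof. intros H. rewrite <- (cancel_of_to p), <- (cancel_of_to q), H. reflexivity. Qed.

Lemma enc_inj f : forall g, enc f = enc g -> f = g.
Proof.
  induction f; intros g H; destruct g; simpl in H; apply to_nat_inj in H;
    inversion H; subst; auto;
    try (match goal with H0 : to_nat _ = to_nat _ |- _ => apply to_nat_inj in H0; inversion H0 end);
    f_equal; auto.
Qed.

Definition theory Ax (T : form -> Prop) := forall f, prv Ax T f -> T f.
Definition prime (T : form -> Prop) := forall a b, T (Or a b) -> T a \/ T b.
Definition avoids Ax (S P : form -> Prop) :=
  forall l, (forall a, In a l -> P a) -> ~ prv Ax S (disj l).

Fixpoint chain Ax (S P : form -> Prop) (n : nat) : form -> Prop :=
  match n with
  | 0 => S
  | Datatypes.S n => fun f => chain Ax S P n f \/ (enc f = n /\ avoids Ax (add (chain Ax S P n) f) P)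
  end.

Lemma chain_mono Ax S P m n : m <= n -> forall f, chain Ax S P m f -> chain Ax S P n f.
Proof. induction 1; intros f Hf; simpl; auto. Qed.

Lemma chain_avoids Ax S P n : avoids Ax S P -> avoids Ax (chain Ax S P n) P.
Proof.
  intros H0; induction n; simpl; auto.
  destruct (classic (exists g, enc g = n /\ avoids Ax (add (chain Ax S P n) g) P)) as [[g [Hg Ha]]|Hn].
  - intros l Hl Hp. apply (Ha l Hl). eapply prv_mono; [exact Hp|].
    intros f [Hf|[Hf1 _]]; unfold add; auto. right. apply enc_inj. congruence.
  - intros l Hl Hp. apply (IHn l Hl). eapply prv_mono; [exact Hp|].
    intros f [Hf|Hf]; auto. exfalso; apply Hn; exists f; auto.
Qed.

Definition limit Ax S P : form -> Prop := fun f => exists n, chain Ax S P n f.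

Lemma limit_compact Ax S P f : prv Ax (limit Ax S P) f -> exists n, prv Ax (chain Ax S P n) f.
Proof.
  intros H; remember (limit Ax S P) as G; induction H; subst.
  - exists 0; apply PrvIPC; auto.
  - exists 0; apply PrvCK; auto.
  - exists 0; apply PrvAx; auto.
  - destruct H as [n Hn]; exists n; apply PrvEl; auto.
  - destruct IHprv1 as [n1 H1]; auto. destruct IHprv2 as [n2 H2]; auto.
    exists (max n1 n2). eapply mp.
    + eapply prv_mono; [exact H2| apply chain_mono; lia].
    + eapply prv_mono; [exact H1| apply chain_mono; lia].
  - exists 0; apply PrvNec; auto.
Qed.

Lemma limit_avoids Ax S P : avoids Ax S P -> avoids Ax (limit Ax S P) P.
Proof.
  intros H l Hl Hp. apply limit_compact in Hp as [n Hn].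
  eapply (chain_avoids Ax S P n H); eauto.
Qed.

Lemma limit_out Ax S P f : avoids Ax S P -> ~ limit Ax S P f ->
  exists l, (forall a, In a l -> P a) /\ prv Ax (limit Ax S P) (Imp f (disj l)).
Proof.
  intros H Hf.
  destruct (classic (avoids Ax (add (chain Ax S P (enc f)) f) P)) as [Ha|Ha].
  - exfalso; apply Hf. exists (Datatypes.S (enc f)). simpl. auto.
  - unfold avoids in Ha. apply not_all_ex_not in Ha as [l Hl].
    apply imply_to_and in Hl as [Hl1 Hl2]. apply NNPP in Hl2.
    exists l; split; auto. apply deduction in Hl2.
    eapply prv_mono; [exact Hl2|]. intros g Hg; exists (enc f); auto.
Qed.

Lemma lindenbaum Ax S P : avoids Ax S P ->
  exists T, (forall f, S f -> T f) /\ theory Ax T /\ prime T /\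
            (forall a, P a -> ~ T a) /\ ~ T Bot.
Proof.
  intros H. exists (limit Ax S P). pose proof (limit_avoids Ax S P H) as HA.
  split; [intros f Hf; exists 0; auto|]. split; [|split; [|split]].
  - intros f Hf. apply NNPP; intros Hn.
    destruct (limit_out Ax S P f H Hn) as [l [Hl Hp]].
    apply (HA l Hl). eapply mp; eauto.
  - intros a b Hab. apply NNPP; intros Hn. apply not_or_and in Hn as [Ha Hb].
    destruct (limit_out Ax S P a H Ha) as [l1 [Hl1 H1]].
    destruct (limit_out Ax S P b H Hb) as [l2 [Hl2 H2]].
    apply (HA (l1 ++ l2)).
    + intros x Hx; apply in_app_or in Hx as [Hx|Hx]; auto.
    + eapply or_e; [apply elem; exact Hab| |].
      * eapply compose; [exact H1| apply disj_app1].
      * eapply compose; [exact H2| apply disj_app2].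
  - intros a Pa Ta. apply (HA [a]).
    + intros x [Hx|[]]; subst; auto.
    + simpl. apply or_l, elem, Ta.
  - intros Tb. apply (HA []). intros x []. apply elem, Tb.
Qed.

Lemma persist F V : valuation F V -> forall f x y, le x y -> forces F V x f -> forces F V y f.
Proof.
  intros HV; induction f; intros x y Hxy Hx; simpl in *.
  - destruct (HV n) as [H _]; eauto.
  - subst. apply e_max; auto.
  - destruct Hx; split; eauto.
  - destruct Hx; [left|right]; eauto.
  - intros z Hyz; apply Hx; eapply le_trans; eauto.
  - intros z w Hyz; apply Hx; eapply le_trans; eauto.
  - intros z Hyz; apply Hx; eapply le_trans; eauto.
Qed.

Lemma e_forces F V : valuation F V -> forall f, forces F V e f.
Proof.
  intros HV; induction f; simpl; auto.
  - apply HV.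
  - intros y Hy; apply e_max in Hy; subst; auto.
  - intros y z Hy Hz. apply e_max in Hy; subst. apply eR in Hz; subst; auto.
  - intros y Hy; apply e_max in Hy; subst. exists e; split; auto. apply eR; auto.
Qed.

Lemma ipc_valid F V x f : valuation F V -> ipc_axiom f -> forces F V x f.
Proof.
  intros HV Hf; destruct Hf; simpl.
  - intros y _ Hy z Hz _. eapply persist; eauto.
  - intros y _ Hy z Hz Hz' w Hw Hw'.
    apply (Hy w (le_trans _ _ _ _ Hz Hw) Hw' w (le_refl _ _) (Hz' w Hw Hw')).
  - intros y _ [H _]; auto.
  - intros y _ [_ H]; auto.
  - intros y _ Hy z Hz Hz'; split; auto. eapply persist; eauto.
  - intros y _ Hy; auto.
  - intros y _ Hy; auto.
  - intros y _ Hy z Hz Hz' w Hw [Hw'|Hw'].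
    + apply Hy; auto. eapply le_trans; eauto.
    + apply Hz'; auto.
  - intros y _ Hy. subst. apply e_forces; auto.
Qed.

Lemma ck_valid F V x f : ck_axiom f -> forces F V x f.
Proof.
  intros Hf; destruct Hf; simpl.
  - intros y _ Hy z Hz Hz' u v Hu Huv.
    apply (Hy u v (le_trans _ _ _ _ Hz Hu) Huv v (le_refl _ _)). eapply Hz'; eauto.
  - intros y _ Hy z Hz Hz' u Hu. destruct (Hz' u Hu) as [v [Huv Hv]].
    exists v; split; auto.
    apply (Hy u v (le_trans _ _ _ _ Hz Hu) Huv v (le_refl _ _) Hv).
Qed.

Lemma N_valid_corr F V x : N_corr F -> forces F V x (Imp (Dia Bot) (Box Bot)).
Proof.
  intros HN; simpl. intros y _ Hy z w Hz Hw.
  eapply (HN y); eauto.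
  intros u Hu. destruct (Hy u Hu) as [v [Hv1 Hv2]]. subst; auto.
Qed.

Lemma N_valid_suff F V x : N_suff F -> forces F V x (Imp (Dia Bot) (Box Bot)).
Proof.
  intros HN; simpl. intros y _ Hy z w Hz Hw.
  destruct (Hy z Hz) as [v [Hv1 Hv2]]. subst. eapply HN; eauto.
Qed.

Lemma C_valid F V x p q : valuation F V -> C_suff F -> forces F V x (Imp (Dia (Or p q)) (Or (Dia p) (Dia q))).
Proof.
  intros HV HC; simpl. intros y _ Hy.
  destruct (HC y) as [y' [Hyy' H]].
  destruct (Hy y' Hyy') as [z [Hz [Hzp|Hzq]]].
  - left. intros u Hu. destruct (H u z Hu Hz) as [w [Hw1 Hw2]].
    exists w; split; auto. apply (persist F V HV p z w); auto.
  - right. intros u Hu. destruct (H u z Hu Hz) as [w [Hw1 Hw2]].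
    exists w; split; auto. apply (persist F V HV q z w); auto.
Qed.

Lemma I_valid F V x p q : valuation F V -> I_suff F -> forces F V x (Imp (Imp (Dia p) (Box q)) (Box (Imp p q))).
Proof.
  intros HV HI; simpl. intros y _ Hy z w Hz Hw v Hv Hvp.
  destruct (HI z w v Hw Hv) as [u [Hzu [Huv Hs]]].
  assert (Hd : forces F V u (Dia p)).
  { intros s Hs'. destruct (Hs s Hs') as [t [Ht1 Ht2]]. exists t; split; auto.
    apply (persist F V HV p v t); auto. }
  exact (Hy u (le_trans _ _ _ _ Hz Hzu) Hd u v (le_refl _ _) Huv).
Qed.

Lemma soundness Ax (C : frame -> Prop) :
  (forall F V x f, C F -> valuation F V -> Ax f -> forces F V x f) ->
  forall G f, prv Ax G f -> sem_conseq C G f.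
Proof.
  intros HAx G f H; induction H; intros F V x HC HV HG.
  - apply ipc_valid; auto.
  - apply ck_valid; auto.
  - apply HAx; auto.
  - apply HG; auto.
  - apply (IHprv2 F V x HC HV HG x (le_refl _ _)). apply IHprv1; auto.
  - simpl. intros y z _ _. apply IHprv; auto. intros g [].
Qed.

Definition Top := Imp Bot Bot.

Lemma th_prv Ax T f : theory Ax T -> prv Ax T f -> T f.
Proof. intros H; apply H. Qed.

Lemma box_lemma Ax G psi : theory Ax G -> prv Ax (fun f => G (Box f)) psi -> G (Box psi).
Proof.
  intros HT H; remember (fun f => G (Box f)) as S; induction H; subst.
  - apply HT, nec, PrvIPC; auto.
  - apply HT, nec, PrvCK; auto.
  - apply HT, nec, PrvAx; auto.
  - auto.
  - apply HT. eapply kbox; apply elem; auto.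
  - apply HT, nec, nec; auto.
Qed.

Lemma dia_comp Ax G X psi : X Top -> (forall a b, X a -> X b -> X (And a b)) ->
  prv Ax (fun f => X f \/ G (Box f)) psi ->
  exists th, X th /\ prv Ax (fun f => G (Box f)) (Imp th psi).
Proof.
  intros HT HA H; remember (fun f => X f \/ G (Box f)) as S; induction H; subst.
  - exists Top; split; auto. eapply mp; [apply ax1| apply PrvIPC; auto].
  - exists Top; split; auto. eapply mp; [apply ax1| apply PrvCK; auto].
  - exists Top; split; auto. eapply mp; [apply ax1| apply PrvAx; auto].
  - destruct H as [H|H].
    + exists f; split; auto. apply prv_id.
    + exists Top; split; auto. eapply mp; [apply ax1| apply elem; auto].
  - destruct IHprv1 as [t1 [X1 H1]]; auto. destruct IHprv2 as [t2 [X2 H2]]; auto.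
    exists (And t1 t2); split; auto. apply deduction.
    eapply mp; [eapply mp; [apply weak; exact H2| eapply and_r; apply hyp]|].
    eapply mp; [apply weak; exact H1| eapply and_l; apply hyp].
  - exists Top; split; auto. eapply mp; [apply ax1| apply nec; auto].
Qed.

Lemma dia_lemma Ax G X psi : theory Ax G -> X Top -> (forall a b, X a -> X b -> X (And a b)) ->
  (forall t, X t -> G (Dia t)) ->
  prv Ax (fun f => X f \/ G (Box f)) psi -> G (Dia psi).
Proof.
  intros HG HT HA HD H. destruct (dia_comp Ax G X psi HT HA H) as [t [Xt Ht]].
  apply box_lemma in Ht; auto. apply HG. eapply kdia; apply elem; eauto.
Qed.

Definition valid (G A : form -> Prop) :=
  forall l, l <> [] -> (forall a, In a l -> A a) -> ~ G (Dia (disj l)).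

Definition wprop Ax (p : (form -> Prop) * (form -> Prop)) :=
  theory Ax (fst p) /\ prime (fst p) /\ valid (fst p) (snd p).

Definition CW Ax := { p | wprop Ax p }.
Definition th {Ax} (w : CW Ax) := fst (proj1_sig w).
Definition av {Ax} (w : CW Ax) := snd (proj1_sig w).

Lemma th_theory Ax (w : CW Ax) : theory Ax (th w).
Proof. exact (proj1 (proj2_sig w)). Qed.
Lemma th_prime Ax (w : CW Ax) : prime (th w).
Proof. exact (proj1 (proj2 (proj2_sig w))). Qed.
Lemma av_valid Ax (w : CW Ax) : valid (th w) (av w).
Proof. exact (proj2 (proj2 (proj2_sig w))). Qed.

Definition cle {Ax} (w w' : CW Ax) := forall f, th w f -> th w' f.
Definition cR {Ax} (w w' : CW Ax) :=
  (forall f, th w (Box f) -> th w' f) /\ (forall a, av w a -> ~ th w' a) /\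
  (th w' Bot -> th w (Dia Bot)).

Lemma wprop_top Ax : wprop Ax (fun _ => True, fun _ => False).
Proof.
  split; [|split]; simpl.
  - intros f _; auto.
  - intros a b _; auto.
  - intros [|a l] Hl Ha; [congruence|]. exfalso; apply (Ha a); left; auto.
Qed.

Definition ce Ax : CW Ax := exist _ _ (wprop_top Ax).

Lemma wprop_empty Ax T : theory Ax T -> prime T -> wprop Ax (T, fun _ => False).
Proof.
  intros H1 H2; split; [|split]; simpl; auto.
  intros [|a l] Hl Ha; [congruence|]. exfalso; apply (Ha a); left; auto.
Qed.

Definition mkw Ax T (H1 : theory Ax T) (H2 : prime T) : CW Ax := exist _ _ (wprop_empty Ax T H1 H2).

Lemma th_top Ax (w : CW Ax) : th w Top.
Proof. apply th_theory, deduction, hyp. Qed.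

Lemma dia_bot_any Ax (G : form -> Prop) a : theory Ax G -> G (Dia Bot) -> G (Dia a).
Proof. intros HG H; apply HG. eapply kdia; [apply nec, deduction, bot_e, hyp| apply elem, H]. Qed.

Lemma dia_bot_av Ax (w : CW Ax) a : th w (Dia Bot) -> ~ av w a.
Proof.
  intros H Ha. apply (av_valid Ax w [a]); [congruence| intros x [Hx|[]]; subst; auto|].
  apply (dia_bot_any Ax); auto. apply th_theory.
Qed.

Lemma bot_ce Ax (w : CW Ax) : th w Bot -> w = ce Ax.
Proof.
  intros Hb. assert (Hall : forall f, th w f) by (intros f; apply th_theory, bot_e, elem, Hb).
  assert (Hno : forall a, ~ av w a) by (intros a; apply dia_bot_av; auto).
  destruct w as [[T A] Hw]; unfold ce. unfold th, av in *; simpl in *.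
  assert (ET : T = fun _ => True) by (extensionality f; apply propositional_extensionality; split; auto).
  assert (EA : A = fun _ => False) by (extensionality f; apply propositional_extensionality; split; [apply Hno| intros []]).
  subst. f_equal. apply proof_irrelevance.
Qed.

Lemma cle_refl Ax (x : CW Ax) : cle x x.
Proof. intros f H; auto. Qed.
Lemma cle_trans Ax (x y z : CW Ax) : cle x y -> cle y z -> cle x z.
Proof. unfold cle; auto. Qed.
Lemma ce_max Ax (x : CW Ax) : cle (ce Ax) x -> x = ce Ax.
Proof. intros H; apply bot_ce; apply H; exact I. Qed.
Lemma ceR Ax (x : CW Ax) : cR (ce Ax) x <-> x = ce Ax.
Proof.
  split.
  - intros [H _]. apply bot_ce; apply H; exact I.
  - intros ->. split; [|split]; simpl; auto.
Qed.

Definition canon Ax : frame :=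
  {| W := CW Ax; e := ce Ax; le := cle; R := cR;
     le_refl := cle_refl Ax; le_trans := cle_trans Ax; e_max := ce_max Ax; eR := ceR Ax |}.

Definition cV Ax (p : nat) (w : CW Ax) : Prop := th w (Var p).

Lemma cV_valuation Ax : valuation (canon Ax) (cV Ax).
Proof. intros p; split. - intros x y Hxy H; apply Hxy, H. - exact I. Qed.

Lemma succ_exists Ax (w : CW Ax) (X : form -> Prop) :
  X Top -> (forall a b, X a -> X b -> X (And a b)) -> (forall t, X t -> th w (Dia t)) ->
  exists t : CW Ax, cR w t /\ forall f, X f -> th t f.
Proof.
  intros HT HA HD.
  destruct (classic (th w (Dia Bot))) as [Hb|Hb].
  - exists (ce Ax); split; [|intros; exact I].
    split; [|split].
    + intros; exact I.
    + intros a Ha _; apply (dia_bot_av Ax w a Hb Ha).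
    + intros _; exact Hb.
  - destruct (lindenbaum Ax (fun f => X f \/ th w (Box f)) (av w)) as [T [HS [HTh [HP [HAv HBot]]]]].
    + intros l Hl Hp. apply (dia_lemma Ax (th w) X) in Hp; auto; [|apply th_theory].
      destruct l as [|a l]; [apply Hb; exact Hp|].
      apply (av_valid Ax w (a :: l)); auto. congruence.
    + exists (mkw Ax T HTh HP). split.
      * split; [|split]; unfold th, av; simpl.
        -- intros f Hf; apply HS; right; auto.
        -- intros a Ha Ta; apply (HAv a Ha Ta).
        -- intros Tb; exfalso; auto.
      * intros f Hf; unfold th; simpl; apply HS; left; auto.
Qed.

Definition wsetav Ax (w : CW Ax) (A : form -> Prop) (H : valid (th w) A) : CW Ax :=
  exist _ (th w, A) (conj (th_theory Ax w) (conj (th_prime Ax w) H)).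

Lemma valid_single Ax (w : CW Ax) a : ~ th w (Dia a) -> valid (th w) (fun f => f = a).
Proof.
  intros Ha l _ Hl Hd. apply Ha, th_theory. eapply kdia; [|apply elem, Hd].
  apply nec, disj_single; auto.
Qed.

Lemma valid_empty (G : form -> Prop) : valid G (fun _ => False).
Proof. intros [|a l] Hl Ha; [congruence|]. exfalso; apply (Ha a); left; auto. Qed.

Lemma truth Ax f : forall w : CW Ax, forces (canon Ax) (cV Ax) w f <-> th w f.
Proof.
  induction f as [n| |a IHa b IHb|a IHa b IHb|a IHa b IHb|a IHa|a IHa]; intros w; simpl.
  - reflexivity.
  - split; [intros ->; exact I| apply bot_ce].
  - rewrite IHa, IHb. split.
    + intros [H1 H2]; apply th_theory, and_i; apply elem; auto.
    + intros H; split; apply th_theory; [eapply and_l| eapply and_r]; apply elem, H.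
  - rewrite IHa, IHb. split.
    + intros [H|H]; apply th_theory; [apply or_l| apply or_r]; apply elem, H.
    + apply th_prime.
  - split.
    + intros H. apply NNPP; intros Hn.
      destruct (lindenbaum Ax (add (th w) a) (fun f => f = b)) as [T [HS [HTh [HP [HAv HBot]]]]].
      * intros l Hl Hp. apply Hn, th_theory, deduction. eapply mp; [|exact Hp].
        apply disj_single; auto.
      * set (t := mkw Ax T HTh HP).
        assert (Hwt : cle w t) by (intros g Hg; apply HS; left; auto).
        assert (Ha : forces (canon Ax) (cV Ax) t a) by (apply IHa; apply HS; right; auto).
        apply (HAv b eq_refl). apply (IHb t). apply (H t Hwt Ha).
    + intros H y Hy Ha. apply IHb. apply IHa in Ha. apply th_theory.
      eapply mp; apply elem; [apply Hy, H| exact Ha].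
  - split.
    + intros H. apply NNPP; intros Hn.
      destruct (lindenbaum Ax (fun f => th w (Box f)) (fun f => f = a)) as [T [HS [HTh [HP [HAv HBot]]]]].
      * intros l Hl Hp. apply Hn. apply (box_lemma Ax); [apply th_theory|].
        eapply mp; [|exact Hp]. apply disj_single; auto.
      * set (t := mkw Ax T HTh HP).
        set (y := wsetav Ax w (fun _ => False) (valid_empty _)).
        assert (Hwy : cle w y) by (intros g Hg; exact Hg).
        assert (Hyt : cR y t).
        { split; [|split]; unfold th, av; simpl.
          - intros g Hg; apply HS; auto.
          - intros g [].
          - intros Tb; exfalso; auto. }
        apply (HAv a eq_refl). apply (IHa t). apply (H y t Hwy Hyt).
    + intros H y z Hy [Hz _]. apply IHa, Hz, Hy, H.
  - split.
    + intros H. apply NNPP; intros Hn.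
      set (y := wsetav Ax w (fun f => f = a) (valid_single Ax w a Hn)).
      assert (Hwy : cle w y) by (intros g Hg; exact Hg).
      destruct (H y Hwy) as [z [[_ [Hz _]] Hza]].
      apply (Hz a eq_refl). apply IHa, Hza.
    + intros H y Hy.
      destruct (succ_exists Ax y (fun t => prv Ax emp (Imp a t))) as [t [Ht1 Ht2]].
      * apply deduction, deduction, hyp.
      * intros p q Hp Hq. apply deduction, and_i; eapply mp; try apply hyp; apply thm_in; auto.
      * intros t Ht. apply th_theory. eapply kdia; [apply nec, Ht| apply elem, Hy, H].
      * exists t; split; auto. apply IHa, Ht2, prv_id.
Qed.

Lemma N_canon Ax : Ax (Imp (Dia Bot) (Box Bot)) -> N_corr (canon Ax).
Proof.
  intros hN x Hx. simpl in *.
  assert (Hd : th x (Dia Bot)).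
  { apply NNPP; intros Hn.
    set (y := wsetav Ax x (fun f => f = Bot) (valid_single Ax x Bot Hn)).
    destruct (Hx y (fun g Hg => Hg)) as [_ [H _]].
    apply (H Bot eq_refl). exact I. }
  assert (Hb : th x (Box Bot)).
  { apply th_theory. eapply mp; [apply PrvAx, hN| apply elem, Hd]. }
  intros y z Hy [Hz _]. apply bot_ce, Hz, Hy, Hb.
Qed.

Lemma Nsuff_canon Ax : Ax (Imp (Dia Bot) (Box Bot)) -> N_suff (canon Ax).
Proof.
  intros hN x y [_ [_ H1]] [Hy _]. simpl in *.
  assert (Hd : th x (Dia Bot)) by (apply H1; exact I).
  assert (Hb : th x (Box Bot)).
  { apply th_theory. eapply mp; [apply PrvAx, hN| apply elem, Hd]. }
  apply bot_ce, Hy, Hb.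
Qed.

Lemma C_dia_list Ax (G : form -> Prop) l :
  (forall p q, Ax (Imp (Dia (Or p q)) (Or (Dia p) (Dia q)))) -> theory Ax G -> prime G ->
  (forall a, In a l -> ~ G (Dia a)) -> G (Dia (disj l)) -> G (Dia Bot).
Proof.
  intros hC HT HP; induction l as [|a l IH]; intros Hl Hd; simpl in *; auto.
  assert (H : G (Or (Dia a) (Dia (disj l)))).
  { apply HT. eapply mp; [apply PrvAx, hC| apply elem, Hd]. }
  destruct (HP _ _ H) as [H'|H'].
  - exfalso; apply (Hl a); auto.
  - apply IH; auto.
Qed.

Lemma C_canon Ax : (forall p q, Ax (Imp (Dia (Or p q)) (Or (Dia p) (Dia q)))) -> C_suff (canon Ax).
Proof.
  intros hC x. simpl in *.
  assert (Hv : valid (th x) (fun a => ~ th x (Dia a))).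
  { intros [|a l] Hl Ha Hd; [congruence|].
    apply (C_dia_list Ax (th x) (a :: l) hC (th_theory Ax x) (th_prime Ax x) Ha) in Hd.
    apply (Ha a (or_introl eq_refl)). apply (dia_bot_any Ax); auto. apply th_theory. }
  exists (wsetav Ax x _ Hv). split; [intros g Hg; exact Hg|].
  intros y z Hy [Hz1 [Hz2 Hz3]].
  destruct (succ_exists Ax y (th z)) as [t [Ht1 Ht2]].
  - apply th_top.
  - intros a b Ha Hb; apply th_theory, and_i; apply elem; auto.
  - intros t Ht. apply Hy. apply NNPP; intros Hn. exact (Hz2 t Hn Ht).
  - exists t; split; auto.
Qed.

Lemma theory_imps Ax (T : form -> Prop) ts c : theory Ax T -> (forall t, In t ts -> T t) -> T (imps ts c) -> T c.
Proof.
  intros HT; induction ts as [|a ts IH]; intros Hts H; simpl in *; auto.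
  apply IH; [intros; apply Hts; auto|]. apply HT. eapply mp; apply elem; [exact H| apply Hts; auto].
Qed.

Lemma comp_dia Ax G (Th : form -> Prop) psi :
  prv Ax (fun f => G f \/ exists t, f = Dia t /\ Th t) psi ->
  exists ts, (forall t, In t ts -> Th t) /\ prv Ax G (imps (map Dia ts) psi).
Proof.
  intros H; remember (fun f => G f \/ exists t, f = Dia t /\ Th t) as S; induction H; subst.
  - exists []; split; [intros _ []|]; apply PrvIPC; auto.
  - exists []; split; [intros _ []|]; apply PrvCK; auto.
  - exists []; split; [intros _ []|]; apply PrvAx; auto.
  - destruct H as [H|[t [-> Ht]]].
    + exists []; split; [intros _ []|]; apply elem; auto.
    + exists [t]; split; [intros x [->|[]]; auto|]. apply prv_id.
  - destruct IHprv1 as [l1 [Hl1 H1]]; auto. destruct IHprv2 as [l2 [Hl2 H2]]; auto.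
    exists (l1 ++ l2); split.
    + intros x Hx; apply in_app_or in Hx as [Hx|Hx]; auto.
    + apply imps_intro. apply imps_elim in H1, H2. rewrite map_app.
      eapply mp.
      * eapply prv_mono; [exact H2|]. intros h [Hh|Hh]; [left; auto| right; apply in_or_app; auto].
      * eapply prv_mono; [exact H1|]. intros h [Hh|Hh]; [left; auto| right; apply in_or_app; auto].
  - exists []; split; [intros _ []|]; apply nec; auto.
Qed.

Lemma I_lemma Ax : (forall p q, Ax (Imp (Imp (Dia p) (Box q)) (Box (Imp p q)))) ->
  forall ts G chi, prv Ax G (imps (map Dia ts) (Box chi)) -> prv Ax G (Box (imps ts chi)).
Proof.
  intros hI; induction ts as [|a ts IH]; intros G chi H; simpl in *; auto.
  apply undeduct in H. apply IH in H. apply deduction in H.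
  eapply mp; [apply PrvAx, hI| exact H].
Qed.

Lemma box_disj Ax (Th : form -> Prop) l : prime Th -> ~ Th Bot ->
  (forall a, In a l -> exists c, a = Box c /\ ~ Th c) ->
  exists c, ~ Th c /\ prv Ax emp (Imp (disj l) (Box c)).
Proof.
  intros HP HB; induction l as [|a l IH]; intros Hl; simpl.
  - exists Bot; split; auto. apply deduction, bot_e, hyp.
  - destruct (Hl a (or_introl eq_refl)) as [c1 [-> Hc1]].
    destruct (IH ltac:(intros x Hx; apply Hl; right; exact Hx)) as [c2 [Hc2 H2]].
    exists (Or c1 c2); split.
    + intros Hc; destruct (HP _ _ Hc); auto.
    + apply deduction. eapply or_e; [apply hyp| |].
      * apply deduction. eapply kbox; [apply nec, deduction, or_l, hyp| apply hyp].
      * apply deduction. eapply kbox; [apply nec, deduction, or_r, hyp|].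
        eapply mp; [apply weak, weak, thm_in, H2| apply hyp].
Qed.

Lemma I_canon Ax : (forall p q, Ax (Imp (Imp (Dia p) (Box q)) (Box (Imp p q)))) -> I_suff (canon Ax).
Proof.
  intros hI x y z Hxy Hyz. simpl in *.
  destruct (classic (th z Bot)) as [Hzb|Hzb].
  - apply bot_ce in Hzb. subst z. exists (ce Ax). split; [intros ? ?; exact I|]. split.
    + apply ceR; reflexivity.
    + intros s Hs. apply ce_max in Hs. subst s. exists (ce Ax); split; [apply ceR; reflexivity| intros ? ?; exact I].
  - destruct (lindenbaum Ax (fun f => th x f \/ exists t, f = Dia t /\ th z t)
                (fun f => exists c, f = Box c /\ ~ th z c)) as [T [HS [HTh [HP [HAv HBot]]]]].
    + intros l Hl Hp.
      destruct (box_disj Ax (th z) l (th_prime Ax z) Hzb Hl) as [c [Hc Hd]].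
      assert (H : prv Ax (fun f => th x f \/ exists t, f = Dia t /\ th z t) (Box c)).
      { eapply mp; [apply thm_in, Hd| exact Hp]. }
      apply comp_dia in H as [ts [Hts H]].
      apply (I_lemma Ax hI) in H. apply th_theory in H.
      apply Hc. apply (theory_imps Ax (th z) ts); auto; [apply th_theory|].
      apply Hyz. destruct Hxy as [Hb _]. apply Hb, H.
    + exists (mkw Ax T HTh HP). split; [|split].
      * intros f Hf; apply HS; left; auto.
      * split; [|split]; unfold th, av; simpl.
        -- intros f Hf. apply NNPP; intros Hn. apply (HAv (Box f)); eauto.
        -- intros _ [].
        -- intros Hb; exfalso; auto.
      * intros s Hs.
        destruct (succ_exists Ax s (th z)) as [t [Ht1 Ht2]].
        -- apply th_top.
        -- intros a b Ha Hb; apply th_theory, and_i; apply elem; auto.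
        -- intros t Ht. apply Hs. unfold th; simpl. apply HS; right; eauto.
        -- exists t; split; auto.
Qed.

Lemma completeness Ax (C : frame -> Prop) : C (canon Ax) ->
  forall G f, sem_conseq C G f -> prv Ax G f.
Proof.
  intros HC G f H. apply NNPP; intros Hn.
  destruct (lindenbaum Ax G (fun g => g = f)) as [T [HS [HTh [HP [HAv HBot]]]]].
  - intros l Hl Hp. apply Hn. eapply mp; [|exact Hp]. apply disj_single; auto.
  - set (w := mkw Ax T HTh HP).
    assert (Hf : forces (canon Ax) (cV Ax) w f).
    { apply H; auto. apply cV_valuation. intros g Hg. apply truth. unfold th; simpl; auto. }
    apply truth in Hf. apply (HAv f eq_refl), Hf.
Qed.

Theorem mainTheorem15 (hasC hasI : bool) :
  sound_strongly_complete (extra_axioms hasC hasI)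
    (fun F => N_corr F /\ (hasC = true -> C_suff F) /\ (hasI = true -> I_suff F))
  /\
  (hasI = true ->
   sound_strongly_complete (extra_axioms hasC hasI)
     (fun F => N_suff F /\ (hasC = true -> C_suff F) /\ I_suff F)).
Proof.
  set (Ax := extra_axioms hasC hasI).
  assert (hN : Ax (Imp (Dia Bot) (Box Bot))) by (left; constructor).
  assert (hC : hasC = true -> forall p q, Ax (Imp (Dia (Or p q)) (Or (Dia p) (Dia q))))
    by (intros E p q; right; left; split; auto; constructor).
  assert (hI : hasI = true -> forall p q, Ax (Imp (Imp (Dia p) (Box q)) (Box (Imp p q))))
    by (intros E p q; right; right; split; auto; constructor).
  split.
  - intros G f; split.
    + apply soundness. intros F V x g [HN [HCs HIs]] HV [Hg|[[E Hg]|[E Hg]]].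
      * destruct Hg; apply N_valid_corr; auto.
      * destruct Hg; apply C_valid; auto.
      * destruct Hg; apply I_valid; auto.
    + apply completeness. split; [apply N_canon; auto|split].
      * intros E; apply C_canon, hC, E.
      * intros E; apply I_canon, hI, E.
  - intros EI G f; split.
    + apply soundness. intros F V x g [HN [HCs HIs]] HV [Hg|[[E Hg]|[E Hg]]].
      * destruct Hg; apply N_valid_suff; auto.
      * destruct Hg; apply C_valid; auto.
      * destruct Hg; apply I_valid; auto.
    + apply completeness. split; [apply Nsuff_canon; auto|split].
      * intros E; apply C_canon, hC, E.
      * apply I_canon, hI, EI.
Qed.
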